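(* Suppose that the solution set of problem $\min_{\boldsymbol\lambda,\mathbf p,\boldsymbol\mu\in\mathbb{R}^{N_h}}\Phi_h(\boldsymbol\lambda,\mathbf p,\boldsymbol\mu)$ is non-empty and let $\mathbf z^*=(\boldsymbol\lambda^*,\mathbf p^*,\boldsymbol\mu^* )$ be a solution. Let $\{\mathbf z^k\}=\{(\boldsymbol\lambda^k,\mathbf p^k,\boldsymbol\mu^k)\}$ be the sequence generated by the discrete sGS-mABCD algorithm started from $\mathbf z^0=(\boldsymbol\lambda^0,\mathbf p^0,\boldsymbol\mu^0)$. Then $$\Phi_h(\mathbf z^k)-\Phi_h(\mathbf z^* )\le\frac{4\tau_h}{(k+1)^2}\quad\forall k\ge1,\qquad \tau_h=\tfrac12\|\mathbf z^0-\mathbf z^*\|_{\mathcal S_h}^2,$$ where $$\mathcal S_h=\frac1\alpha\begin{pmatrix}M_hG_h^{-1}M_h+W_h-M_h&0&0\\0&0&0\\0&0&\gamma M_hW_h^{-1}M_h\end{pmatrix},\qquad G_h=M_h+\alpha K_hM_h^{-1}K_h.$$ Moreover, the sequence $\{(\boldsymbol\lambda^k,\mathbf p^k,\boldsymbol\mu^k)\}$ is bounded.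
   Context: Setting: $\Omega\subset\mathbb{R}^n$, $n\in\{2,3\}$, convex bounded domain; $\{\mathcal T_h\}$ regular quasi-uniform triangulations with mesh size $h$; $Y_h$ the space of continuous piecewise linear functions on $\mathcal T_h$ vanishing outside $\Omega_h$, with nodal basis $\{\phi_i\}_{i=1}^{N_h}$. The bilinear form is $a(y,v)=\int_\Omega(\sum_{i,j}a_{ji}y_{x_i}v_{x_j}+c_0yv)\,dx$ with $a_{ij}=a_{ji}, c_0\in L^\infty$, $c_0\ge0$, uniformly elliptic. Matrices: stiffness $K_h=(a(\phi_i,\phi_j))_{i,j}$, mass $M_h=(\int_{\Omega_h}\phi_i\phi_j\,dx)_{i,j}$, lumped mass $W_h=\mathrm{diag}(\int_{\Omega_h}\phi_i\,dx)_i$; $\gamma=4$ if $n=2$, $\gamma=5$ if $n=3$ (so that $\mathbf z^TM_h\mathbf z\le\mathbf z^TW_h\mathbf z\le\gamma\,\mathbf z^TM_h\mathbf z$). $\mathbf y_d,\mathbf y_r\in\mathbb{R}^{N_h}$ are coefficient vectors of the $L^2$-projections of $y_d,y_r\in L^2(\Omega)$ onto $Y_h$; $a\le0\le b$, $\alpha,\beta>0$. For a symmetric positive (semi)definite $P$, $\|\mathbf x\|_P^2=\mathbf x^TP\mathbf x$. The discrete dual objective is $$\Phi_h(\boldsymbol\lambda,\mathbf p,\boldsymbol\mu)=\tfrac12\|K_h\mathbf p-M_h\mathbf y_d\|_{M_h^{-1}}^2+\tfrac1{2\alpha}\|\boldsymbol\lambda+\boldsymbol\mu-\mathbf p\|_{M_h}^2+\langle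 M_h\mathbf y_r,\mathbf p\rangle+\delta_{[-\beta,\beta]}(\boldsymbol\lambda)+\delta^*_{[a,b]}(M_h\boldsymbol\mu)-\tfrac12\|\mathbf y_d\|_{M_h}^2,$$ where $\delta_{[-\beta,\beta]}$ is the indicator of the box $[-\beta,\beta]^{N_h}$ and $\delta^*_{[a,b]}(\boldsymbol\xi)=\sum_i\max(a\xi_i,b\xi_i)$. Discrete sGS-mABCD algorithm: given $\mathbf z^0$ with $\boldsymbol\lambda^0\in[-\beta,\beta]^{N_h}$, set $(\tilde{\boldsymbol\lambda}^1,\tilde{\mathbf p}^1,\tilde{\boldsymbol\mu}^1)=\mathbf z^0$, $t_1=1$. For $k\ge1$: (i) $\hat{\mathbf p}^k=\arg\min_{\mathbf p}\{\tfrac12\|K_h\mathbf p-M_h\mathbf y_d\|_{M_h^{-1}}^2+\tfrac1{2\alpha}\|\mathbf p-\tilde{\boldsymbol\lambda}^k-\tilde{\boldsymbol\mu}^k\|_{M_h}^2+\langle M_h\mathbf y_r,\mathbf p\rangle\}$; (ii) $\boldsymbol\lambda^k=\arg\min_{\boldsymbol\lambda}\{\delta_{[-\beta,\beta]}(\boldsymbol\lambda)+\tfrac1{2\alpha}\|\boldsymbol\lambda-(\hat{\mathbf p}^k-\tilde{\boldsymbol\mu}^k)\|_{M_h}^2+\tfrac1{2\alpha}\|\boldsymbol\lambda-\tilde{\boldsymbol\lambda}^k\|_{W_h-M_h}^2\}$ $=\Pi_{[-\beta,\beta]}(\tilde{\boldsymbol\lambda}^k+W_h^{-1}M_h(\hat{\mathbf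 p}^k-\tilde{\boldsymbol\mu}^k-\tilde{\boldsymbol\lambda}^k))$; (iii) $\mathbf p^k$ is defined as in (i) with $\tilde{\boldsymbol\lambda}^k$ replaced by $\boldsymbol\lambda^k$; (iv) $\boldsymbol\mu^k=\arg\min_{\boldsymbol\mu}\{\delta^*_{[a,b]}(M_h\boldsymbol\mu)+\tfrac1{2\alpha}\|\boldsymbol\mu-(\mathbf p^k-\boldsymbol\lambda^k)\|_{M_h}^2+\tfrac1{2\alpha}\|\boldsymbol\mu-\tilde{\boldsymbol\mu}^k\|^2_{\gamma M_hW_h^{-1}M_h-M_h}\}$; (v) $t_{k+1}=\frac{1+\sqrt{1+4t_k^2}}2$, $\beta_k=\frac{t_k-1}{t_{k+1}}$, $\tilde{\boldsymbol\lambda}^{k+1}=\boldsymbol\lambda^k+\beta_k(\boldsymbol\lambda^k-\boldsymbol\lambda^{k-1})$, and likewise for $\tilde{\mathbf p}^{k+1}$, $\tilde{\boldsymbol\mu}^{k+1}$. *)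

(* Defs.v *)
From HB Require Import structures.
From mathcomp Require Import all_boot all_order all_algebra.
Set Implicit Arguments. Unset Strict Implicit. Unset Printing Implicit Defensive.
Import Order.TTheory GRing.Theory Num.Theory.
Local Open Scope ring_scope.

Section Defs.
Variable R : rcfType.
Variable N : nat.
Notation vec := 'cV[R]_N.
Notation mat := 'M[R]_N.

Definition qf (P : mat) (x : vec) : R := (x^T *m P *m x) ord0 ord0.
Definition ip (x y : vec) : R := (x^T *m y) ord0 ord0.

Definition sym_mx (P : mat) : Prop := P^T = P.
Definition posdef_mx (P : mat) : Prop := forall x : vec, x != 0 -> 0 < qf P x.
Definition diag_matrix (P : mat) : Prop := forall i j : 'I_N, i != j -> P i j = 0.

Definition gamma_of (n : nat) : R := if n == 2%N then 4 else 5.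

Definition in_box (beta : R) (l : vec) : Prop :=
  forall i : 'I_N, - beta <= l i ord0 <= beta.

(* support function delta^*_{[a,b]}(xi) = sum_i max(a xi_i, b xi_i) *)
Definition delta_star (a b : R) (xi : vec) : R :=
  \sum_(i < N) Num.max (a * xi i ord0) (b * xi i ord0).

Definition is_argmin (D : vec -> Prop) (f : vec -> R) (x : vec) : Prop :=
  D x /\ forall y, D y -> f x <= f y.

Variables (K M W : mat) (yd yr : vec) (alpha beta a b gamma : R).

(* Finite part of Phi_h: Phi_h = Phi_fin + delta_{[-beta,beta]}(lambda), i.e.
   Phi_h(l,p,m) = Phi_fin(l,p,m) if l is in the box and +infinity otherwise. *)
Definition Phi_fin (l p m : vec) : R :=
  2^-1 * qf (invmx M) (K *m p - M *m yd)
  + (2 * alpha)^-1 * qf M (l + m - p)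
  + ip (M *m yr) p
  + delta_star a b (M *m m)
  - 2^-1 * qf M yd.

Definition Fp (lt mt : vec) (p : vec) : R :=
  2^-1 * qf (invmx M) (K *m p - M *m yd)
  + (2 * alpha)^-1 * qf M (p - lt - mt)
  + ip (M *m yr) p.

(* objective of sub-step (ii) (without the indicator, which is the domain) *)
Definition Fl (ph mt lt : vec) (l : vec) : R :=
  (2 * alpha)^-1 * qf M (l - (ph - mt))
  + (2 * alpha)^-1 * qf (W - M) (l - lt).

Definition Fm (pk lk mt : vec) (m : vec) : R :=
  delta_star a b (M *m m)
  + (2 * alpha)^-1 * qf M (m - (pk - lk))
  + (2 * alpha)^-1 * qf (gamma *: (M *m invmx W *m M) - M) (m - mt).

(* t-sequence: tseq k = t_{k+1}; t_1 = 1, t_{k+1} = (1 + sqrt(1 + 4 t_k^2))/2 *)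
Fixpoint tseq (k : nat) : R :=
  match k with
  | 0%N => 1
  | S j => (1 + Num.sqrt (1 + 4 * tseq j ^+ 2)) / 2
  end.
Definition beta_k (k : nat) : R := (tseq k.-1 - 1) / tseq k.

(* The discrete sGS-mABCD iteration.  lam, p, mu : iterates (index 0 = z^0);
   lamt, pt, mut : extrapolated points tilde z^k (k >= 1); ph : hat p^k. *)
Definition sGS_mABCD (lam p mu lamt pt mut ph : nat -> vec) : Prop :=
  [/\ lamt 1%N = lam 0%N, pt 1%N = p 0%N, mut 1%N = mu 0%N &
   forall k : nat, (1 <= k)%N ->
   [/\ is_argmin (fun _ => True) (Fp (lamt k) (mut k)) (ph k),
       is_argmin (in_box beta) (Fl (ph k) (mut k) (lamt k)) (lam k),
       is_argmin (fun _ => True) (Fp (lam k) (mut k)) (p k),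
       is_argmin (fun _ => True) (Fm (p k) (lam k) (mut k)) (mu k) &
     [/\ lamt k.+1 = lam k + beta_k k *: (lam k - lam k.-1),
       pt k.+1 = p k + beta_k k *: (p k - p k.-1) &
       mut k.+1 = mu k + beta_k k *: (mu k - mu k.-1)]]].

Definition Gh : mat := M + alpha *: (K *m invmx M *m K).

Definition Snorm2 (dl dp dm : vec) : R :=
  alpha^-1 * (qf (M *m invmx Gh *m M + W - M) dl
              + qf (gamma *: (M *m invmx W *m M)) dm).

End Defs.

(* Main.v *)
Require Import Defs.
From HB Require Import structures.
From mathcomp Require Import all_boot all_order all_algebra.
From mathcomp Require Import ring lra.
Import Order.TTheory GRing.Theory Num.Theory.
Local Open Scope ring_scope.
Set Implicit Arguments. Unset Strict Implicit.


Lemma ipC (R : rcfType) N (x y : 'cV[R]_N) : ip x y = ip y x.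
Proof. by rewrite /ip -[y^T *m x]trmxK trmx_mul trmxK [in RHS]mxE. Qed.
Lemma ipDr (R : rcfType) N (x y z : 'cV[R]_N) : ip x (y + z) = ip x y + ip x z.
Proof. by rewrite /ip mulmxDr mxE. Qed.
Lemma ipDl (R : rcfType) N (x y z : 'cV[R]_N) : ip (y + z) x = ip y x + ip z x.
Proof. by rewrite ipC ipDr !(ipC x). Qed.
Lemma ipZr (R : rcfType) N (c : R) (x y : 'cV[R]_N) : ip x (c *: y) = c * ip x y.
Proof. by rewrite /ip -scalemxAr mxE. Qed.
Lemma ipZl (R : rcfType) N (c : R) (x y : 'cV[R]_N) : ip (c *: x) y = c * ip x y.
Proof. by rewrite ipC ipZr ipC. Qed.
Lemma ipNr (R : rcfType) N (x y : 'cV[R]_N) : ip x (- y) = - ip x y.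
Proof. by rewrite -scaleN1r ipZr mulN1r. Qed.
Lemma ipNl (R : rcfType) N (x y : 'cV[R]_N) : ip (- x) y = - ip x y.
Proof. by rewrite ipC ipNr ipC. Qed.
Lemma ipBr (R : rcfType) N (x y z : 'cV[R]_N) : ip x (y - z) = ip x y - ip x z.
Proof. by rewrite ipDr ipNr. Qed.
Lemma ipBl (R : rcfType) N (x y z : 'cV[R]_N) : ip (y - z) x = ip y x - ip z x.
Proof. by rewrite ipDl ipNl. Qed.
Lemma ip0r (R : rcfType) N (x : 'cV[R]_N) : ip x 0 = 0.
Proof. by rewrite /ip mulmx0 mxE. Qed.
Lemma ipMl (R : rcfType) N (A : 'M[R]_N) (x y : 'cV[R]_N) : ip (A *m x) y = ip x (A^T *m y).
Proof. by rewrite /ip trmx_mul mulmxA. Qed.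
Lemma qfE (R : rcfType) N (P : 'M[R]_N) x : qf P x = ip x (P *m x).
Proof. by rewrite /qf /ip mulmxA. Qed.
Lemma ip_symM (R : rcfType) N (P : 'M[R]_N) x y : sym_mx P -> ip x (P *m y) = ip y (P *m x).
Proof. by move=> hP; rewrite ipC ipMl hP. Qed.
Lemma ipxx (R : rcfType) N (x : 'cV[R]_N) : ip x x = \sum_i x i ord0 ^+ 2.
Proof. rewrite /ip mxE; apply: eq_bigr => i _; by rewrite mxE expr2. Qed.
Lemma ipxx_ge0 (R : rcfType) N (x : 'cV[R]_N) : 0 <= ip x x.
Proof. by rewrite ipxx sumr_ge0 // => i _; rewrite sqr_ge0. Qed.
Lemma ipxx_eq0 (R : rcfType) N (x : 'cV[R]_N) : ip x x = 0 -> x = 0.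
Proof.
rewrite ipxx => /eqP; rewrite psumr_eq0 => [/allP H|i _]; last by rewrite sqr_ge0.
apply/matrixP => i j; rewrite (ord1 j) mxE.
by have /implyP /(_ isT) := H i (mem_index_enum _); rewrite sqrf_eq0 => /eqP.
Qed.


Lemma inj_unitmx (R : rcfType) N (P : 'M[R]_N) :
  (forall x : 'cV[R]_N, P *m x = 0 -> x = 0) -> P \in unitmx.
Proof.
move=> H; rewrite -unitmx_tr -row_free_unit -kermx_eq0.
have HB : kermx P^T *m P^T = 0 by apply/sub_kermxP.
apply/eqP/row_matrixP => i; rewrite row0.
have : row i (kermx P^T) *m P^T = 0 by rewrite -row_mul HB row0.
move=> Hr; apply: trmx_inj; rewrite trmx0; apply: H.
by apply: trmx_inj; rewrite trmx_mul trmxK Hr trmx0.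
Qed.

Lemma posdef_unit (R : rcfType) N (P : 'M[R]_N) : posdef_mx P -> P \in unitmx.
Proof.
move=> hP; apply: inj_unitmx => x Hx; apply/eqP; apply/negPn/negP => /hP.
by rewrite qfE Hx ip0r ltxx.
Qed.

Lemma qf_expand (R : rcfType) N (P : 'M[R]_N) (u d : 'cV[R]_N) (t : R) :
  sym_mx P -> qf P (u + t *: d) = qf P u + t * (2 * ip d (P *m u)) + t ^+ 2 * qf P d.
Proof.
move=> hP; rewrite !qfE mulmxDr -scalemxAr !(ipDl, ipDr, ipZl, ipZr).
rewrite (ip_symM u d hP); ring.
Qed.

Lemma qf_add (R : rcfType) N (P : 'M[R]_N) (u d : 'cV[R]_N) :
  sym_mx P -> qf P (u + d) = qf P u + 2 * ip d (P *m u) + qf P d.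
Proof. by move=> hP; rewrite -[d in LHS]scale1r qf_expand // mul1r expr1n mul1r. Qed.

Lemma qfN (R : rcfType) N (P : 'M[R]_N) (u : 'cV[R]_N) : qf P (- u) = qf P u.
Proof. by rewrite !qfE mulmxN ipNl ipNr opprK. Qed.

Lemma qfZ (R : rcfType) N (P : 'M[R]_N) (c : R) (u : 'cV[R]_N) : qf P (c *: u) = c ^+ 2 * qf P u.
Proof. by rewrite !qfE -scalemxAr ipZl ipZr mulrA expr2. Qed.

Lemma qf_addM (R : rcfType) N (P Q : 'M[R]_N) u : qf (P + Q) u = qf P u + qf Q u.
Proof. by rewrite !qfE mulmxDl ipDr. Qed.
Lemma qf_subM (R : rcfType) N (P Q : 'M[R]_N) u : qf (P - Q) u = qf P u - qf Q u.
Proof. by rewrite !qfE mulmxBl ipBr. Qed.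
Lemma qf_scaleM (R : rcfType) N (P : 'M[R]_N) c u : qf (c *: P) u = c * qf P u.
Proof. by rewrite !qfE -scalemxAl ipZr. Qed.

Lemma sym_inv (R : rcfType) N (P : 'M[R]_N) : sym_mx P -> sym_mx (invmx P).
Proof. by rewrite /sym_mx trmx_inv => ->. Qed.

Lemma qf_conj (R : rcfType) N (P A : 'M[R]_N) x : sym_mx P ->
  qf (P *m A *m P) x = qf A (P *m x).
Proof. by move=> hP; rewrite !qfE -!mulmxA ipMl hP. Qed.


Lemma vi_argmin (R : rcfType) N (D : 'cV[R]_N -> Prop) (h phi L C : 'cV[R]_N -> R) x :
  (forall y t, D y -> 0 <= t <= 1 -> D (x + t *: (y - x))) ->
  (forall y t, D y -> 0 <= t <= 1 -> h (x + t *: (y - x)) <= h x + t * (h y - h x)) ->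
  (forall d t, phi (x + t *: d) = phi x + t * L d + t ^+ 2 * C d) ->
  (forall y, D y -> h x + phi x <= h y + phi y) ->
  forall y, D y -> 0 <= h y - h x + L (y - x).
Proof.
move=> Dc hc He Hm y Dy.
set v := h y - h x + L (y - x); set c := C (y - x).
have key : forall t, 0 < t <= 1 -> 0 <= v + t * c.
  move=> t /andP [t0 t1].
  have t01 : 0 <= t <= 1 by rewrite t1 ltW.
  have := Hm _ (Dc _ _ Dy t01); rewrite He.
  have := hc _ _ Dy t01.
  rewrite /v /c expr2 => h1 h2.
  have h3 : 0 <= t * (h y - h x + L (y - x) + t * c).
    rewrite /c mulrDr mulrA; lra.
  by rewrite pmulr_rge0 in h3.
rewrite leNgt; apply/negP => v0.
have ac : 0 <= `|c| by [].
have den : 0 < `|c| - v by lra.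
set t := - v / (2 * (`|c| - v)).
have tpos : 0 < t by rewrite /t divr_gt0 // ?oppr_gt0 // mulr_gt0.
have tle : t * (2 * (`|c| - v)) = - v by rewrite /t mulfVK // mulf_neq0 // gt_eqF.
have t1 : t <= 1 by nra.
have := key t; rewrite tpos t1 => /(_ isT).
have : t * c <= t * `|c| by rewrite ler_pM2l // ler_norm.
nra.
Qed.


Ltac vec_eq := apply/matrixP => i j; rewrite !mxE; ring.

Lemma argmin_grad (R : rcfType) N (phi : 'cV[R]_N -> R) (g : 'cV[R]_N) (C : 'cV[R]_N -> R) x :
  (forall d t, phi (x + t *: d) = phi x + t * ip d g + t ^+ 2 * C d) ->
  is_argmin (fun _ => True) phi x -> g = 0.
Proof.
move=> He [_ Hm].
have H := @vi_argmin R N (fun _ => True) (fun _ => 0) phi (fun d => ip d g) C x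
  (fun _ _ _ _ => I) ltac:(by move=> *; rewrite subrr mulr0 addr0) He
  ltac:(by move=> y _; rewrite !add0r; apply: Hm) (x - g) I.
move: H; rewrite subrr add0r addrAC subrr add0r ipNl oppr_ge0 => H.
by apply: ipxx_eq0; apply/le_anti; rewrite H ipxx_ge0.
Qed.

Lemma Fp_grad (R : rcfType) N (K M : 'M[R]_N) yd yr alpha lt mt p0 :
  0 < alpha -> sym_mx K -> sym_mx M -> sym_mx (invmx M) ->
  is_argmin (fun _ => True) (Fp K M yd yr alpha lt mt) p0 ->
  K *m (invmx M *m (K *m p0 - M *m yd)) + alpha^-1 *: (M *m (p0 - lt - mt)) + M *m yr = 0.
Proof.
move=> ha hK hM hN Hmin.
apply: (@argmin_grad R N _ _
  (fun d => 2^-1 * qf (invmx M) (K *m d) + (2 * alpha)^-1 * qf M d) p0 _ Hmin) => d t.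
rewrite /Fp.
have -> : K *m (p0 + t *: d) - M *m yd = (K *m p0 - M *m yd) + t *: (K *m d).
  by rewrite mulmxDr -scalemxAr; vec_eq.
have -> : p0 + t *: d - lt - mt = (p0 - lt - mt) + t *: d by vec_eq.
rewrite !qf_expand // ipDr ipZr !ipDr !ipZr ipMl hK (ipC (M *m yr) d).
rewrite invfM; field; exact: lt0r_neq0.
Qed.

Lemma box_conv (R : rcfType) N (beta : R) (x y : 'cV[R]_N) t :
  in_box beta x -> in_box beta y -> 0 <= t <= 1 -> in_box beta (x + t *: (y - x)).
Proof.
move=> hx hy /andP [t0 t1] i; rewrite !mxE.
move: (hx i) (hy i) => /andP [x1 x2] /andP [y1 y2].
apply/andP; have e1 : 0 <= (1 - t) * (x i ord0 + beta) by apply: mulr_ge0; lra.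
have e2 : 0 <= t * (y i ord0 + beta) by apply: mulr_ge0; lra.
have e3 : 0 <= (1 - t) * (beta - x i ord0) by apply: mulr_ge0; lra.
have e4 : 0 <= t * (beta - y i ord0) by apply: mulr_ge0; lra.
split; nra.
Qed.

Lemma Fl_vi (R : rcfType) N (M W : 'M[R]_N) alpha beta ph mt lt l0 :
  0 < alpha -> sym_mx M -> sym_mx (W - M) ->
  is_argmin (in_box beta) (Fl M W alpha ph mt lt) l0 ->
  forall y, in_box beta y ->
  0 <= alpha^-1 * ip (y - l0) (M *m (l0 - (ph - mt)))
       + alpha^-1 * ip (y - l0) ((W - M) *m (l0 - lt)).
Proof.
move=> ha hM hWM [Hb Hm] y Hy.
have He : forall d t, Fl M W alpha ph mt lt (l0 + t *: d) = Fl M W alpha ph mt lt l0 +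
   t * (alpha^-1 * ip d (M *m (l0 - (ph - mt))) + alpha^-1 * ip d ((W - M) *m (l0 - lt)))
   + t ^+ 2 * ((2 * alpha)^-1 * qf M d + (2 * alpha)^-1 * qf (W - M) d).
  move=> d t; rewrite /Fl.
  have -> : l0 + t *: d - (ph - mt) = (l0 - (ph - mt)) + t *: d by vec_eq.
  have -> : l0 + t *: d - lt = (l0 - lt) + t *: d by vec_eq.
  rewrite !qf_expand // invfM; field; exact: lt0r_neq0.
have := @vi_argmin R N (in_box beta) (fun _ => 0) (Fl M W alpha ph mt lt) _ _ l0
  (fun y t Dy Ht => box_conv Hb Dy Ht) ltac:(by move=> *; rewrite subrr mulr0 addr0) He
  ltac:(by move=> z Hz; rewrite !add0r; apply: Hm) y Hy.
by rewrite subrr add0r.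
Qed.

Lemma ds_conv (R : rcfType) N (a b : R) (M : 'M[R]_N) (x y : 'cV[R]_N) t :
  0 <= t <= 1 ->
  delta_star a b (M *m (x + t *: (y - x))) <=
  delta_star a b (M *m x) + t * (delta_star a b (M *m y) - delta_star a b (M *m x)).
Proof.
move=> /andP [t0 t1]; rewrite /delta_star -sumrB mulr_sumr -big_split /=.
apply: ler_sum => i _.
rewrite mulmxDr -scalemxAr mulmxBr.
move: (M *m x) (M *m y) => Mx My; rewrite !mxE.
set u := Mx i ord0; set v := My i ord0.
set mu := Num.max (a * u) (b * u); set mv := Num.max (a * v) (b * v).
have h1 : a * u <= mu by rewrite le_max lexx.
have h2 : b * u <= mu by rewrite le_max lexx orbT.
have h3 : a * v <= mv by rewrite le_max lexx.
have h4 : b * v <= mv by rewrite le_max lexx orbT.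
have t1' : 0 <= 1 - t by lra.
have e1 : 0 <= (1 - t) * (mu - a * u) by apply: mulr_ge0; lra.
have e2 : 0 <= (1 - t) * (mu - b * u) by apply: mulr_ge0; lra.
have e3 : 0 <= t * (mv - a * v) by apply: mulr_ge0; lra.
have e4 : 0 <= t * (mv - b * v) by apply: mulr_ge0; lra.
rewrite ge_max; apply/andP; split; nra.
Qed.

Lemma Fm_vi (R : rcfType) N (M W : 'M[R]_N) alpha a b gamma pk lk mt m0 :
  0 < alpha -> sym_mx M -> sym_mx (gamma *: (M *m invmx W *m M) - M) ->
  is_argmin (fun _ => True) (Fm M W alpha a b gamma pk lk mt) m0 ->
  forall y,
  0 <= delta_star a b (M *m y) - delta_star a b (M *m m0)
       + alpha^-1 * ip (y - m0) (M *m (m0 - (pk - lk)))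
       + alpha^-1 * ip (y - m0) ((gamma *: (M *m invmx W *m M) - M) *m (m0 - mt)).
Proof.
set E := gamma *: (M *m invmx W *m M) - M.
move=> ha hM hE [_ Hm] y.
set phi := fun m => (2 * alpha)^-1 * qf M (m - (pk - lk)) + (2 * alpha)^-1 * qf E (m - mt).
have He : forall d t, phi (m0 + t *: d) = phi m0 +
   t * (alpha^-1 * ip d (M *m (m0 - (pk - lk))) + alpha^-1 * ip d (E *m (m0 - mt)))
   + t ^+ 2 * ((2 * alpha)^-1 * qf M d + (2 * alpha)^-1 * qf E d).
  move=> d t; rewrite /phi.
  have -> : m0 + t *: d - (pk - lk) = (m0 - (pk - lk)) + t *: d by vec_eq.
  have -> : m0 + t *: d - mt = (m0 - mt) + t *: d by vec_eq.
  rewrite !qf_expand // invfM; field; exact: lt0r_neq0.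
have := @vi_argmin R N (fun _ => True) (fun m => delta_star a b (M *m m)) phi _ _ m0
  (fun _ _ _ _ => I) (fun y t _ Ht => ds_conv a b M m0 y Ht) He
  ltac:(by move=> z _; rewrite /phi !addrA; apply: Hm) y I.
by rewrite addrA.
Qed.


Lemma posdef_psd (R : rcfType) N (P : 'M[R]_N) x : posdef_mx P -> 0 <= qf P x.
Proof.
move=> hP; have [->|/hP/ltW //] := eqVneq x 0.
by rewrite qfE mulmx0 ip0r.
Qed.

Lemma qf_inv (R : rcfType) N (P : 'M[R]_N) v : sym_mx P -> P \in unitmx ->
  qf (invmx P) v = qf P (invmx P *m v).
Proof.
by move=> hP hU; rewrite !qfE mulmxA mulmxV // mul1mx ipC.
Qed.

Lemma inv_psd (R : rcfType) N (P : 'M[R]_N) v : sym_mx P -> posdef_mx P ->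
  0 <= qf (invmx P) v.
Proof. by move=> hP hpd; rewrite qf_inv ?posdef_unit //; apply: posdef_psd. Qed.

Lemma diag_sym (R : rcfType) N (W : 'M[R]_N) : diag_matrix W -> sym_mx W.
Proof.
move=> hW; apply/matrixP => i j; rewrite mxE.
have [->//|nij] := eqVneq i j.
by rewrite hW ?hW // eq_sym.
Qed.

Lemma symD (R : rcfType) N (P Q : 'M[R]_N) : sym_mx P -> sym_mx Q -> sym_mx (P + Q).
Proof. by rewrite /sym_mx linearD /= => -> ->. Qed.
Lemma symB (R : rcfType) N (P Q : 'M[R]_N) : sym_mx P -> sym_mx Q -> sym_mx (P - Q).
Proof. by rewrite /sym_mx linearB /= => -> ->. Qed.
Lemma symZ (R : rcfType) N (P : 'M[R]_N) c : sym_mx P -> sym_mx (c *: P).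
Proof. by rewrite /sym_mx linearZ /= => ->. Qed.
Lemma sym_conj (R : rcfType) N (P A : 'M[R]_N) : sym_mx P -> sym_mx A -> sym_mx (P *m A *m P).
Proof. by rewrite /sym_mx !trmx_mul => -> ->; rewrite mulmxA. Qed.

Lemma G_posdef (R : rcfType) N (K M : 'M[R]_N) alpha : 0 < alpha ->
  sym_mx M -> posdef_mx M -> sym_mx K -> posdef_mx (Gh K M alpha).
Proof.
move=> ha hM hpd hK x nx; rewrite /Gh qf_addM qf_scaleM qf_conj //.
have := hpd x nx; have := inv_psd (K *m x) hM hpd.
move=> h1 h2; have := mulr_ge0 (ltW ha) h1; lra.
Qed.

Lemma G_sym (R : rcfType) N (K M : 'M[R]_N) alpha :
  sym_mx M -> sym_mx K -> sym_mx (Gh K M alpha).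
Proof. by move=> hM hK; rewrite /Gh; apply: symD => //; apply/symZ/sym_conj/sym_inv. Qed.

Lemma S3_ge (R : rcfType) N (M W : 'M[R]_N) gamma e : 0 < gamma ->
  sym_mx M -> sym_mx W -> W \in unitmx ->
  (forall z, 0 <= qf W z) -> (forall z, qf W z <= gamma * qf M z) ->
  qf M e <= qf (gamma *: (M *m invmx W *m M)) e.
Proof.
move=> hg hM hW hU Wpsd hWM.
rewrite qf_scaleM qf_conj //.
set v := M *m e.
have key : forall y, 2 * ip y v - qf W y <= qf (invmx W) v.
  move=> y; have := Wpsd (invmx W *m v + (-1) *: y).
  rewrite qf_expand // -qf_inv // mulmxA mulmxV // mul1mx; lra.
have := key (gamma^-1 *: e); have := hWM (gamma^-1 *: e).
rewrite /v !qfZ ipZl -qfE => h1 h2.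
have hg1 : gamma * gamma^-1 = 1 by rewrite mulfV // gt_eqF.
have h3 : 2 * (gamma^-1 * qf M e) - gamma * (gamma^-1 ^+ 2 * qf M e) <= qf (invmx W) (M *m e)
  by lra.
have := ler_wpM2l (ltW hg) h3.
have -> : gamma * (2 * (gamma^-1 * qf M e) - gamma * (gamma^-1 ^+ 2 * qf M e)) =
   qf M e * (2 * (gamma * gamma^-1)) - qf M e * ((gamma * gamma^-1) ^+ 2).
  by ring.
rewrite hg1 expr1n; lra.
Qed.

Lemma QL (R : rcfType) N (P : 'M[R]_N) y d e : sym_mx P -> (forall z, 0 <= qf P z) ->
  2 * ip d (P *m (y - e)) - qf P e <= qf P (y + d) - qf P y.
Proof.
move=> hP hpsd; have := hpsd (d + e); rewrite !qf_add // mulmxBr ipBr.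
rewrite (ip_symM e d hP); lra.
Qed.

Lemma G_rel (R : rcfType) N (K M : 'M[R]_N) yd yr alpha lt mt ph l p :
  0 < alpha -> sym_mx K -> sym_mx M -> sym_mx (invmx M) ->
  is_argmin (fun _ => True) (Fp K M yd yr alpha lt mt) ph ->
  is_argmin (fun _ => True) (Fp K M yd yr alpha l mt) p ->
  Gh K M alpha *m (p - ph) = M *m (l - lt).
Proof.
move=> ha hK hM hN H1 H3.
have g1 := Fp_grad ha hK hM hN H1; have g3 := Fp_grad ha hK hM hN H3.
rewrite /Gh mulmxDl -scalemxAl.
move: g1 g3; rewrite !(mulmxBr, mulmxDr) !mulmxA.
move: (K *m invmx M *m K *m p) (K *m invmx M *m K *m ph) (K *m invmx M *m M *m yd)
  (M *m p) (M *m ph) (M *m l) (M *m lt) (M *m mt) (M *m yr) => A B C P1 P2 L1 L2 Mt Y.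
move=> g1 g3; apply/matrixP => i j.
move/matrixP: g1 => /(_ i j); move/matrixP: g3 => /(_ i j); rewrite !mxE => g3 g1.
have hai : alpha * alpha^-1 = 1 by rewrite mulfV // gt_eqF.
have -> : A i j - B i j = - alpha^-1 * (P1 i j - P2 i j - L1 i j + L2 i j) by lra.
field; exact: lt0r_neq0.
Qed.


Lemma step_ineq (R : rcfType) N (K M W : 'M[R]_N) (yd yr : 'cV[R]_N) (alpha beta a b gamma : R)
  (halpha : 0 < alpha) (hg : 0 < gamma)
  (hMs : sym_mx M) (hMpd : posdef_mx M) (hKs : sym_mx K) (hWs : sym_mx W)
  (hMW : forall z, qf M z <= qf W z) (hWM : forall z, qf W z <= gamma * qf M z)
  lt pt mt ph l p m
  (H1 : is_argmin (fun _ => True) (Fp K M yd yr alpha lt mt) ph)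
  (H2 : is_argmin (in_box beta) (Fl M W alpha ph mt lt) l)
  (H3 : is_argmin (fun _ => True) (Fp K M yd yr alpha l mt) p)
  (H4 : is_argmin (fun _ => True) (Fm M W alpha a b gamma p l mt) m)
  l' p' m' : in_box beta l' ->
  Phi_fin K M yd yr alpha a b l p m + 2^-1 * Snorm2 K M W alpha gamma (l' - l) (p' - p) (m' - m)
  <= Phi_fin K M yd yr alpha a b l' p' m' + 2^-1 * Snorm2 K M W alpha gamma (l' - lt) (p' - pt) (m' - mt).
Proof.
move=> hl'.
have hMU := posdef_unit hMpd.
have hNs := sym_inv hMs.
have hMpsd : forall z, 0 <= qf M z by move=> z; apply: posdef_psd.
have hWpsd : forall z, 0 <= qf W z by move=> z; have := hMpsd z; have := hMW z; lra.
have hWpd : posdef_mx W by move=> z nz; have := hMpd z nz; have := hMW z; lra.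
have hWU := posdef_unit hWpd.
have hGs := G_sym alpha hMs hKs.
have hGpd := G_posdef halpha hMs hMpd hKs.
have hGU := posdef_unit hGpd.
set G := Gh K M alpha in hGs hGpd hGU *.
set E := gamma *: (M *m invmx W *m M) - M.
have hEs : sym_mx E by apply: symB => //; apply/symZ/sym_conj/sym_inv.
have hWMs : sym_mx (W - M) by apply: symB.
set S1 := M *m invmx G *m M + W - M.
have hS1s : sym_mx S1 by apply: symB => //; apply: symD => //; apply/sym_conj/sym_inv.
have hS1psd : 0 <= qf S1 (l - lt).
  rewrite /S1 qf_subM qf_addM qf_conj //.
  have := inv_psd (M *m (l - lt)) hGs hGpd; have := hMW (l - lt); lra.
set S3 := gamma *: (M *m invmx W *m M).
have hS3s : sym_mx S3 by apply/symZ/sym_conj/sym_inv.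
have hS3 : qf M (m - mt) <= qf S3 (m - mt) by apply: S3_ge.
have g3 := Fp_grad halpha hKs hMs hNs H3.
have Grel := G_rel halpha hKs hMs hNs H1 H3.
have Cl := Fl_vi halpha hMs hWMs H2 hl'.
have Cm := Fm_vi halpha hMs hEs H4 m'.
have dpE : invmx G *m (M *m (l - lt)) = p - ph by rewrite -Grel mulKmx.
rewrite -/E in Cm.
set N0 := invmx M in hNs g3 *.
have Ff : 2^-1 * qf N0 (K *m p' - M *m yd) + ip (M *m yr) p' =
   2^-1 * qf N0 (K *m p - M *m yd) + ip (M *m yr) p +
   (ip (p' - p) (K *m (N0 *m (K *m p - M *m yd))) + ip (p' - p) (M *m yr))
   + 2^-1 * qf N0 (K *m (p' - p)).
  have -> : K *m p' - M *m yd = (K *m p - M *m yd) + K *m (p' - p) by rewrite mulmxBr; vec_eq.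
  have -> : ip (M *m yr) p' = ip (M *m yr) p + ip (p' - p) (M *m yr)
    by rewrite (ipC _ p') (ipC _ p) -ipDl addrC subrK.
  by rewrite qf_add // ipMl hKs; field.
have Fg : ip (p' - p) (K *m (N0 *m (K *m p - M *m yd))) =
   - (alpha^-1 * ip (p' - p) (M *m (p - l - mt))) - ip (p' - p) (M *m yr).
  move/eqP: g3; rewrite -addrA addr_eq0 => /eqP ->.
  by rewrite ipNr ipDr ipZr opprD.
have Fq : 2 * ip ((l' - l) + (m' - m) - (p' - p)) (M *m (l - p + mt)) - qf M (m - mt)
    <= qf M (l' + m' - p') - qf M (l + m - p).
  have -> : (l' - l) + (m' - m) - (p' - p) = (l' + m' - p') - (l + m - p) by vec_eq.
  have -> : l - p + mt = (l + m - p) - (m - mt) by vec_eq.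
  move: (QL (l + m - p) ((l' + m' - p') - (l + m - p)) (m - mt) hMs hMpsd).
  by have -> : l + m - p + (l' + m' - p' - (l + m - p)) = l' + m' - p' by vec_eq.
have ia0 : 0 <= (2 * alpha)^-1 by rewrite invr_ge0 mulr_ge0 // ltW.
have Fq' := ler_wpM2l ia0 Fq.
have hS3' := ler_wpM2l ia0 hS3.
have hS1' := mulr_ge0 ia0 hS1psd.
have FS1 : qf S1 (l' - lt) = qf S1 (l - lt) +
    2 * (ip (l' - l) (M *m (p - ph)) + ip (l' - l) ((W - M) *m (l - lt))) + qf S1 (l' - l).
  have -> : l' - lt = (l - lt) + (l' - l) by vec_eq.
  have S1e : S1 *m (l - lt) = M *m (p - ph) + (W - M) *m (l - lt).
    by rewrite /S1 -addrA mulmxDl -!mulmxA dpE.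
  by rewrite qf_add // S1e ipDr.
have FS3 : qf S3 (m' - mt) = qf S3 (m - mt) +
    2 * (ip (m' - m) (E *m (m - mt)) + ip (m' - m) (M *m (m - mt))) + qf S3 (m' - m).
  have -> : m' - mt = (m - mt) + (m' - m) by vec_eq.
  have S3e : S3 *m (m - mt) = E *m (m - mt) + M *m (m - mt) by rewrite /E mulmxBl subrK.
  by rewrite qf_add // S3e ipDr.
have hNK : 0 <= qf N0 (K *m (p' - p)) by apply: inv_psd.
rewrite /Phi_fin /Snorm2 -/G -/S1 -/S3 FS1 FS3.
rewrite ipBl ipDl in Fq'.
rewrite ?(mulmxBr, mulmxDr, ipBr, ipDr, ipNr, ipZr) in Fq' Cl Cm Fg Ff hNK *.
rewrite !invfM in Fq' hS3' hS1' *.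
rewrite -/N0.
lra.
Qed.


Lemma qf_diff (R : rcfType) N (P : 'M[R]_N) x y : sym_mx P ->
  qf P x - qf P y = ip (x - y) (P *m (x + y)).
Proof.
move=> hP; rewrite !qfE mulmxDr ipBl !ipDr (ip_symM y x hP); ring.
Qed.

Lemma fista_id (R : rcfType) N (P : 'M[R]_N) (t : R) a w c1 c2 : sym_mx P ->
  t * (t - 1) * (qf P (c1 - a) - qf P (c1 - w)) + t * (qf P (c2 - a) - qf P (c2 - w))
  = qf P (t *: a - (t - 1) *: c1 - c2) - qf P (t *: w - (t - 1) *: c1 - c2).
Proof.
move=> hP; rewrite !qf_diff //.
have -> : c1 - a - (c1 - w) = w - a by vec_eq.
have -> : c2 - a - (c2 - w) = w - a by vec_eq.
have -> : t *: a - (t - 1) *: c1 - c2 - (t *: w - (t - 1) *: c1 - c2) = (- t) *: (w - a)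
  by vec_eq.
rewrite ipZl.
transitivity (ip (w - a) (P *m ((t * (t - 1)) *: (c1 - a + (c1 - w)) + t *: (c2 - a + (c2 - w))))).
  by rewrite [in RHS]mulmxDr -![in RHS]scalemxAr [in RHS]ipDr ![in RHS]ipZr.
transitivity (ip (w - a) (P *m ((- t) *: (t *: a - (t - 1) *: c1 - c2 + (t *: w - (t - 1) *: c1 - c2))))).
  by congr (ip _ (P *m _)); vec_eq.
by rewrite -scalemxAr ipZr.
Qed.

Lemma tseq_ge1 (R : rcfType) k : 1 <= tseq R k.
Proof.
elim: k => [|k IH] /=; first by [].
have h : 1 <= Num.sqrt (1 + 4 * tseq R k ^+ 2).
  rewrite -[X in X <= _]sqrtr1 ler_sqrt; have := sqr_ge0 (tseq R k); lra.
lra.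
Qed.

Lemma tseq_rec (R : rcfType) k : tseq R k.+1 ^+ 2 - tseq R k.+1 = tseq R k ^+ 2.
Proof.
rewrite /=; set s := Num.sqrt _.
have hs : s ^+ 2 = 1 + 4 * tseq R k ^+ 2.
  rewrite sqr_sqrtr //; have := sqr_ge0 (tseq R k); lra.
have -> : ((1 + s) / 2) ^+ 2 - (1 + s) / 2 = (s ^+ 2 - 1) / 4 by field.
rewrite hs; field. all: try by [].
Qed.

Lemma tseq_lb (R : rcfType) k : (k%:R + 2) / 2 <= tseq R k.
Proof.
elim: k => [|k IH] /=; first by lra.
have h0 := tseq_ge1 R k.
have h : 2 * tseq R k <= Num.sqrt (1 + 4 * tseq R k ^+ 2).
  rewrite -(@ger0_norm _ (2 * tseq R k)); last by lra.
  rewrite -sqrtr_sqr ler_sqrt; rewrite ?exprMn; have := sqr_ge0 (tseq R k); lra.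
rewrite -natr1. lra.
Qed.


Definition Qf (R : rcfType) N (S1 S3 : 'M[R]_N) (ia : R) (x y : 'cV[R]_N) :=
  ia * (qf S1 x + qf S3 y).

Lemma Qf_id (R : rcfType) N (S1 S3 : 'M[R]_N) ia (t : R) al wl c1l c2l am wm c1m c2m :
  sym_mx S1 -> sym_mx S3 ->
  t * (t - 1) * (Qf S1 S3 ia (c1l - al) (c1m - am) - Qf S1 S3 ia (c1l - wl) (c1m - wm))
  + t * (Qf S1 S3 ia (c2l - al) (c2m - am) - Qf S1 S3 ia (c2l - wl) (c2m - wm))
  = Qf S1 S3 ia (t *: al - (t - 1) *: c1l - c2l) (t *: am - (t - 1) *: c1m - c2m)
    - Qf S1 S3 ia (t *: wl - (t - 1) *: c1l - c2l) (t *: wm - (t - 1) *: c1m - c2m).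
Proof.
move=> h1 h3; rewrite /Qf.
have e1 := fista_id t al wl c1l c2l h1.
have e3 := fista_id t am wm c1m c2m h3.
set A := qf S1 (t *: al - _ - _) in e1 *.
set B := qf S1 (t *: wl - _ - _) in e1 *.
set C := qf S3 (t *: am - _ - _) in e3 *.
set D := qf S3 (t *: wm - _ - _) in e3 *.
have -> : ia * (A + C) - ia * (B + D) = ia * ((A - B) + (C - D)) by ring.
rewrite -e1 -e3; ring.
Qed.

Lemma fista (R : rcfType) N (S1 S3 : 'M[R]_N) (ia : R) (Ph : nat -> R) (Phs : R)
  (lam mu lamt mut : nat -> 'cV[R]_N) (ls ms : 'cV[R]_N) :
  sym_mx S1 -> sym_mx S3 -> (forall x y, 0 <= Qf S1 S3 ia x y) ->
  (forall k, (1 <= k)%N -> Ph k.+1 + 2^-1 * Qf S1 S3 ia (lam k - lam k.+1) (mu k - mu k.+1)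
      <= Ph k + 2^-1 * Qf S1 S3 ia (lam k - lamt k.+1) (mu k - mut k.+1)) ->
  (forall k, (1 <= k)%N -> Ph k + 2^-1 * Qf S1 S3 ia (ls - lam k) (ms - mu k)
      <= Phs + 2^-1 * Qf S1 S3 ia (ls - lamt k) (ms - mut k)) ->
  (forall k, (1 <= k)%N -> lamt k.+1 = lam k + beta_k R k *: (lam k - lam k.-1)
                        /\ mut k.+1 = mu k + beta_k R k *: (mu k - mu k.-1)) ->
  lamt 1%N = lam 0%N -> mut 1%N = mu 0%N ->
  forall k, (1 <= k)%N ->
    Ph k - Phs <= 4 * (2^-1 * Qf S1 S3 ia (lam 0%N - ls) (mu 0%N - ms)) / ((k%:R + 1) ^+ 2).
Proof.
move=> h1 h3 hQ hA hB hext hl1 hm1.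
set Q := Qf S1 S3 ia.
pose Ul k := tseq R k.-1 *: lam k - (tseq R k.-1 - 1) *: lam k.-1 - ls.
pose Um k := tseq R k.-1 *: mu k - (tseq R k.-1 - 1) *: mu k.-1 - ms.
pose En k := tseq R k.-1 ^+ 2 * (Ph k - Phs) + 2^-1 * Q (Ul k) (Um k).
set tau := 2^-1 * Q (lam 0%N - ls) (mu 0%N - ms).
have base : En 1%N <= tau.
  have := hB 1%N isT; rewrite hl1 hm1 /En /Ul /Um /= expr1n mul1r subrr !scale0r !subr0 !scale1r.
  have -> : ls - lam 1%N = - (lam 1%N - ls) by rewrite opprB.
  have -> : ms - mu 1%N = - (mu 1%N - ms) by rewrite opprB.
  have -> : ls - lam 0%N = - (lam 0%N - ls) by rewrite opprB.
  have -> : ms - mu 0%N = - (mu 0%N - ms) by rewrite opprB.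
  rewrite /Q /Qf !qfN /tau /Q /Qf; lra.
have dec : forall k, (1 <= k)%N -> En k.+1 <= En k.
  case=> [//|k] _.
  set t := tseq R k.+1; set s := tseq R k.
  have ht1 : 1 <= t := tseq_ge1 R k.+1.
  have hts : t ^+ 2 - t = s ^+ 2 := tseq_rec R k.
  have [ew1 ew2] := hext k.+1 isT.
  have Ul' : t *: lamt k.+2 - (t - 1) *: lam k.+1 - ls = Ul k.+1.
    have eb : beta_k R k.+1 = (s - 1) / t by [].
    rewrite ew1 eb /Ul -/t -/s; apply/matrixP => i j; rewrite !mxE; field.
    by rewrite gt_eqF // (lt_le_trans ltr01 ht1).
  have Um' : t *: mut k.+2 - (t - 1) *: mu k.+1 - ms = Um k.+1.
    have eb : beta_k R k.+1 = (s - 1) / t by [].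
    rewrite ew2 eb /Um -/t -/s; apply/matrixP => i j; rewrite !mxE; field.
    by rewrite gt_eqF // (lt_le_trans ltr01 ht1).
  have I := Qf_id ia t (lam k.+2) (lamt k.+2) (lam k.+1) ls (mu k.+2) (mut k.+2) (mu k.+1) ms h1 h3.
  rewrite Ul' Um' -/Q in I.
  have t0 : 0 <= t by lra.
  have t10 : 0 <= t * (t - 1) by apply: mulr_ge0; lra.
  have A := ler_wpM2l t10 (hA k.+1 isT).
  have B := ler_wpM2l t0 (hB k.+2 isT).
  have eU : Ul k.+2 = t *: lam k.+2 - (t - 1) *: lam k.+1 - ls by [].
  have eM : Um k.+2 = t *: mu k.+2 - (t - 1) *: mu k.+1 - ms by [].
  have eT1 : tseq R k.+2.-1 = t by [].
  have eT2 : tseq R k.+1.-1 = s by [].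
  rewrite /En eU eM eT1 eT2 -hts -/Q.
  rewrite -/Q in A B.
  lra.
have chain : forall k, (1 <= k)%N -> En k <= tau.
  elim=> [//|k IH] _.
  case: k IH => [_ //|k IH].
  exact: le_trans (dec k.+1 isT) (IH isT).
case=> [//|k] _.
have hE := chain k.+1 isT.
have hQk := hQ (Ul k.+1) (Um k.+1); rewrite -/Q in hQk.
have htau : 0 <= tau by rewrite /tau; have := hQ (lam 0%N - ls) (mu 0%N - ms); rewrite -/Q; lra.
have hs := tseq_lb R k.
have eT : tseq R k.+1.-1 = tseq R k by [].
move: hE; rewrite /En eT -/Q => hE.
set s := tseq R k in hs hE.
set K := k%:R in hs.
have -> : (k.+1%:R + 1 : R) = K + 2 by rewrite -natr1 /K; ring.
have hK : 0 <= K by rewrite /K ler0n.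
rewrite ler_pdivlMr; last by apply: exprn_gt0; lra.
set D := Ph k.+1 - Phs in hE *.
have hs2 : (K + 2) ^+ 2 <= 4 * s ^+ 2.
  have h0 : 0 <= (K + 2) / 2 by lra.
  have := ler_pM h0 h0 hs hs.
  rewrite -!expr2 => h; have -> : 4 * s ^+ 2 = 4 * (s * s) by rewrite expr2.
  rewrite -expr2; have : ((K + 2) / 2) ^+ 2 = (K + 2) ^+ 2 / 4 by field.
  move=> e; rewrite e in h; lra.
case: (lerP D 0) => hD.
  have : D * (K + 2) ^+ 2 <= 0 by apply: mulr_le0_ge0 => //; apply: sqr_ge0.
  lra.
have : D * (K + 2) ^+ 2 <= D * (4 * s ^+ 2) by rewrite ler_pM2l.
have : s ^+ 2 * D <= tau by lra.
nra.
Qed.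


Lemma ip_delta (R : rcfType) N (i : 'I_N) (x : 'cV[R]_N) : ip (delta_mx i ord0) x = x i ord0.
Proof. by rewrite /ip trmx_delta -rowE mxE. Qed.

Lemma CS (R : rcfType) N (P : 'M[R]_N) x y : sym_mx P -> posdef_mx P ->
  ip y (P *m x) ^+ 2 <= qf P y * qf P x.
Proof.
move=> hP hpd; have [->|ny] := eqVneq y 0.
  by rewrite /ip trmx0 mul0mx mxE expr2 mul0r qfE mulmx0 ip0r mul0r.
have hq := hpd y ny; set q := qf P y in hq *.
set bb := ip y (P *m x).
have := posdef_psd (x + (- (bb / q)) *: y) hpd.
rewrite qf_expand // -/q -/bb => h.
have h2 : 0 <= qf P x - bb ^+ 2 / q.
  suff -> : qf P x - bb ^+ 2 / q = qf P x + - (bb / q) * (2 * bb) + (- (bb / q)) ^+ 2 * q by [].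
  field; exact: lt0r_neq0.
have := mulr_ge0 (ltW hq) h2.
have -> : q * (qf P x - bb ^+ 2 / q) = q * qf P x - bb ^+ 2 by field; exact: lt0r_neq0.
lra.
Qed.

Lemma coord_bound (R : rcfType) N (P : 'M[R]_N) : sym_mx P -> posdef_mx P ->
  exists C, 0 <= C /\ forall (x : 'cV[R]_N) i, `|x i ord0| <= 1 + C * qf P x.
Proof.
move=> hP hpd.
have hU := posdef_unit hpd.
pose c i := qf P (invmx P *m delta_mx i (@ord0 0)).
have c0 : forall i, 0 <= c i by move=> i; apply: posdef_psd.
exists (\sum_i c i); split; first by apply: sumr_ge0 => i _.
move=> x i.
have ex : x i ord0 = ip (invmx P *m delta_mx i ord0) (P *m x).
  by rewrite ip_symM // mulmxA mulmxV // mul1mx ipC ip_delta.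
have hcs : x i ord0 ^+ 2 <= c i * qf P x by rewrite ex; apply: CS.
have hci : c i <= \sum_j c j.
  rewrite (bigD1 i) //= lerDl; apply: sumr_ge0 => j _; exact: c0.
have hx : 0 <= qf P x by apply: posdef_psd.
have h1 : `|x i ord0| <= 1 + x i ord0 ^+ 2.
  rewrite -real_normK ?num_real //; have := normr_ge0 (x i ord0); nra.
have := ler_wpM2r hx hci; lra.
Qed.

Lemma ds_ge0 (R : rcfType) N (a b : R) (v : 'cV[R]_N) : a <= 0 -> 0 <= b -> 0 <= delta_star a b v.
Proof.
move=> ha hb; rewrite /delta_star; apply: sumr_ge0 => i _.
rewrite le_max; case: (lerP 0 (v i ord0)) => hv.
  by apply/orP; right; rewrite mulr_ge0.
by apply/orP; left; rewrite mulr_le0 // ltW.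
Qed.

Lemma inv_posdef (R : rcfType) N (M : 'M[R]_N) : sym_mx M -> posdef_mx M -> posdef_mx (invmx M).
Proof.
move=> hM hpd v nv; have hU := posdef_unit hpd.
rewrite qf_inv //; apply: hpd; apply/negP => /eqP h.
by move/negP: nv; apply; apply/eqP; rewrite -[v]mul1mx -(mulmxV hU) -mulmxA h mulmx0.
Qed.

Lemma phi_bound (R : rcfType) N (K M : 'M[R]_N) yd yr (alpha a b beta : R)
  (halpha : 0 < alpha) (ha : a <= 0) (hb : 0 <= b)
  (hMs : sym_mx M) (hMpd : posdef_mx M) (hKs : sym_mx K) (hKpd : posdef_mx K) (U : R) :
  exists B, forall l p m, in_box beta l -> Phi_fin K M yd yr alpha a b l p m <= U ->
    forall i, [/\ `|l i ord0| <= B, `|p i ord0| <= B & `|m i ord0| <= B].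
Proof.
set N0 := invmx M.
have hNs : sym_mx N0 := sym_inv hMs.
have hNpd : posdef_mx N0 := inv_posdef hMs hMpd.
have hMU := posdef_unit hMpd.
have hKU := posdef_unit hKpd.
set KNK := K *m N0 *m K.
have hKNKs : sym_mx KNK by apply: sym_conj.
have hKNKpd : posdef_mx KNK.
  move=> x nx; rewrite qf_conj //; apply: hNpd; apply/negP => /eqP h.
  by have := hKpd x nx; rewrite qfE h ip0r ltxx.
have [Cp [Cp0 hCp]] := coord_bound hKNKs hKNKpd.
have [Cr [Cr0 hCr]] := coord_bound hMs hMpd.
set c := invmx K *m (M *m yr).
set U' := U - ip c (M *m yd) + 2^-1 * qf M yd + qf N0 (M *m c).
set Bp := 1 + Cp * (8 * U' + 2 * qf N0 (M *m yd)).
set Br := 1 + Cr * (2 * alpha * U').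
exists (beta + `|Bp| + `|Br|) => l p m hl hPhi i.
set w := K *m p - M *m yd.
have e1 : ip (M *m yr) p = ip c w + ip c (M *m yd).
  by rewrite -ipDr /w subrK /c [in RHS]ipMl trmx_inv hKs mulmxA mulVmx // mul1mx.
have e2 : - (2^-1 * 2^-1 * qf N0 w + qf N0 (M *m c)) <= ip c w.
  have := posdef_psd (2^-1 *: w + M *m c) hNpd.
  rewrite qf_add // qfZ -scalemxAr ipZr ipMl hMs mulmxA mulmxV // mul1mx.
  rewrite expr2; lra.
have hds := ds_ge0 (M *m m) ha hb.
have hqw : 0 <= qf N0 w by apply: posdef_psd.
have hqr : 0 <= qf M (l + m - p) by apply: posdef_psd.
have hqy : 0 <= qf N0 (M *m yd) by apply: posdef_psd.
move: hPhi; rewrite /Phi_fin -/N0 -/w e1 invfM => hPhi.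
have ia0 : 0 <= 2^-1 * alpha^-1 * qf M (l + m - p).
  by apply: mulr_ge0 => //; apply: mulr_ge0; rewrite invr_ge0 ?ltW.
have hw : qf N0 w <= 4 * U' by rewrite /U'; lra.
have hr : qf M (l + m - p) <= 2 * alpha * U'.
  have h' : 2^-1 * alpha^-1 * qf M (l + m - p) <= U' by rewrite /U'; lra.
  have := ler_wpM2l (ltW (mulr_gt0 (ltr0Sn _ 1%N) halpha)) h'.
  rewrite !mulrA (_ : 2 * alpha / 2 / alpha = 1) ?mul1r //.
  by field; exact: lt0r_neq0.
have hKp : qf KNK p <= 8 * U' + 2 * qf N0 (M *m yd).
  rewrite qf_conj // (_ : K *m p = w + M *m yd); last by rewrite /w subrK.
  rewrite (qf_add w (M *m yd) hNs).
  have := posdef_psd (w + (-1) *: (M *m yd)) hNpd.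
  rewrite (qf_expand w (M *m yd) (-1) hNs) expr2; lra.
have hp : `|p i ord0| <= Bp.
  apply: le_trans (hCp p i) _; rewrite /Bp lerD2l.
  apply: ler_wpM2l => //; lra.
have hrr : `|(l + m - p) i ord0| <= Br.
  apply: le_trans (hCr _ i) _; rewrite /Br lerD2l; exact: ler_wpM2l.
have hli : `|l i ord0| <= beta by rewrite ler_norml; apply: hl.
have hm : m i ord0 = (l + m - p) i ord0 - l i ord0 + p i ord0 by rewrite !mxE; ring.
have hB1 := ler_norm Bp; have hB2 := ler_norm Br.
have hB0 := normr_ge0 Bp; have hB0' := normr_ge0 Br.
have hb0 : 0 <= beta by apply: le_trans (normr_ge0 _) hli.
split.
- lra.
- lra.
- rewrite hm; apply: le_trans (ler_normD _ _) _.
  apply: le_trans (lerD (ler_normB _ _) (lexx _)) _; lra.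
Qed.

Unset Implicit Arguments.

Theorem theorem3 (R : rcfType) (n N : nat) (hn : n = 2%N \/ n = 3%N)
  (K M W : 'M[R]_N) (yd yr : 'cV[R]_N) (alpha beta a b : R)
  (halpha : 0 < alpha) (hbeta : 0 < beta) (ha : a <= 0) (hb : 0 <= b)
  (hMs : sym_mx M) (hMpd : posdef_mx M)
  (hKs : sym_mx K) (hKpd : posdef_mx K)
  (hWd : diag_matrix W) (hWpos : forall i, 0 < W i i)
  (hMW : forall z, qf M z <= qf W z)
  (hWM : forall z, qf W z <= gamma_of R n * qf M z)
  (ls ps ms : 'cV[R]_N)
  (hsol_box : in_box beta ls)
  (hsol : forall l p m, in_box beta l ->
     Phi_fin K M yd yr alpha a b ls ps ms <= Phi_fin K M yd yr alpha a b l p m)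
  (lam p mu lamt pt mut ph : nat -> 'cV[R]_N)
  (hl0 : in_box beta (lam 0%N))
  (halg : sGS_mABCD K M W yd yr alpha beta a b (gamma_of R n)
            lam p mu lamt pt mut ph) :
  (forall k : nat, (1 <= k)%N ->
     Phi_fin K M yd yr alpha a b (lam k) (p k) (mu k)
       - Phi_fin K M yd yr alpha a b ls ps ms
     <= 4 * (2^-1 * Snorm2 K M W alpha (gamma_of R n)
                      (lam 0%N - ls) (p 0%N - ps) (mu 0%N - ms))
          / ((k%:R + 1) ^+ 2))
  /\ (exists B : R, forall (k : nat) (i : 'I_N),
        [/\ `|lam k i ord0| <= B, `|p k i ord0| <= B & `|mu k i ord0| <= B]).
Proof.
set gamma := gamma_of R n in hWM halg *.
have hg : 0 < gamma by rewrite /gamma /gamma_of; case: ifP.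
have hWs := diag_sym hWd.
case: halg => hl1 hp1 hm1 Hk.
set Ph := fun k => Phi_fin K M yd yr alpha a b (lam k) (p k) (mu k).
set Phs := Phi_fin K M yd yr alpha a b ls ps ms.
set S1 := M *m invmx (Gh K M alpha) *m M + W - M.
set S3 := gamma *: (M *m invmx W *m M).
have hMpsd : forall z, 0 <= qf M z by move=> z; apply: posdef_psd.
have hWpd : posdef_mx W by move=> z nz; have := hMpd z nz; have := hMW z; lra.
have hGs := G_sym alpha hMs hKs.
have hGpd := G_posdef halpha hMs hMpd hKs.
have hS1s : sym_mx S1 by apply: symB => //; apply: symD => //; apply/sym_conj/sym_inv.
have hS3s : sym_mx S3 by apply/symZ/sym_conj/sym_inv.
have hQ : forall x y, 0 <= Qf S1 S3 alpha^-1 x y.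
  move=> x y; rewrite /Qf; apply: mulr_ge0; first by rewrite invr_ge0 ltW.
  apply: addr_ge0.
    rewrite /S1 qf_subM qf_addM qf_conj //.
    have := inv_psd (M *m x) hGs hGpd; have := hMW x; lra.
  by rewrite /S3 qf_scaleM qf_conj //; apply: mulr_ge0; [exact: ltW | exact: inv_psd].
have inbox : forall k, (1 <= k)%N -> in_box beta (lam k).
  by move=> k hk; case: (Hk k hk) => _ [] ? _ _ _ _.
have stp : forall k, (1 <= k)%N -> forall l' p' m', in_box beta l' ->
   Ph k + 2^-1 * Qf S1 S3 alpha^-1 (l' - lam k) (m' - mu k)
   <= Phi_fin K M yd yr alpha a b l' p' m' + 2^-1 * Qf S1 S3 alpha^-1 (l' - lamt k) (m' - mut k).
  move=> k hk l' p' m' hl'.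
  case: (Hk k hk) => H1 H2 H3 H4 _.
  exact (step_ineq halpha hg hMs hMpd hKs hWs hMW hWM (pt k) H1 H2 H3 H4 p' m' hl').
have rate := @fista R N S1 S3 alpha^-1 Ph Phs lam mu lamt mut ls ms hS1s hS3s hQ
  (fun k hk => stp k.+1 isT (lam k) (p k) (mu k) (inbox k hk))
  (fun k hk => stp k hk ls ps ms hsol_box)
  (fun k hk => let: And5 _ _ _ _ (And3 e1 _ e3) := Hk k hk in conj e1 e3) hl1 hm1.
split; first exact: rate.
set tau := 2^-1 * Qf S1 S3 alpha^-1 (lam 0%N - ls) (mu 0%N - ms).
have htau : 0 <= tau by rewrite /tau; have := hQ (lam 0%N - ls) (mu 0%N - ms); lra.
have [B HB] := phi_bound yd yr beta halpha ha hb hMs hMpd hKs hKpd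
   (Num.max (Ph 0%N) (Phs + 4 * tau)).
exists B => k i.
apply: HB.
  by case: k => [|k]; [exact: hl0 | exact: inbox].
case: k => [|k]; first by rewrite le_max lexx.
rewrite le_max; apply/orP; right.
have := rate k.+1 isT; rewrite -/tau.
have h1 : 1 <= (k.+1%:R + 1 : R) ^+ 2.
  have h0 : 1 <= (k.+1%:R + 1 : R) by rewrite lerDr ler0n.
  have := ler_pM ler01 ler01 h0 h0; rewrite mul1r -expr2 //.
have h2 : 4 * tau / (k.+1%:R + 1) ^+ 2 <= 4 * tau.
  rewrite ler_pdivrMr; last by lra.
  have := ler_wpM2l (mulr_ge0 (ler0n _ 4) htau) h1; rewrite mulr1 //.
rewrite /Ph; lra.
Qed.
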